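(* Let $B\ge1$, $G=\{0,\frac1B,\dots,1\}$, $t\in G$ and $\eta\in(0,t)$. Any $f^*\in\mathcal U_\eta$ that maximises $\mathcal T_t$ over $\mathcal U_\eta$ satisfies: (i) $\mathcal E(f^* )=\eta$; (ii) writing $i_M:=B\max(\mathrm{supp}(f^* ))$, either (a) $f^*_0>f^*_1=f^*_2=\dots=f^*_{i_M-1}\ge f^*_{i_M}$, or (b) $i_M=Bt$ and $f^*_0=f^*_1=\dots=f^*_{i_M-1}\le f^*_{i_M}$.
   Context: Identify a probability mass function $f$ on $G$ with $(f_0,\dots,f_B)$, $f_i=f(i/B)$. Let $\mathcal T_t(f)=\sum_{i\ge Bt}f_i$, $\mathcal E(f)=\sum_{i=1}^B\frac iBf_i$ and $\mathrm{supp}(f)=\{i/B\in G:f_i>0\}$. $f$ is unimodal if there is $m$ with $f_0\le\dots\le f_m$ and $f_m\ge\dots\ge f_B$. $\mathcal U$ is the set of unimodal probability mass functions on $G$ and $\mathcal U_\eta=\{f\in\mathcal U:\mathcal E(f)\le\eta\}$. *)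

(* Defs.v *)
(* A pmf on G = {0, 1/B, ..., 1} is f : 'I_B.+1 -> R with f i = f(i/B). *)
From HB Require Import structures.
From mathcomp Require Import all_boot all_order all_algebra.
From mathcomp Require Import reals.
Set Implicit Arguments. Unset Strict Implicit. Unset Printing Implicit Defensive.
Import Order.TTheory GRing.Theory Num.Theory.
Local Open Scope ring_scope.

Section Defs.
Variable R : realType.
Variable B : nat.

Definition fat (f : 'I_B.+1 -> R) (i : nat) : R := f (inord i).

Definition is_pmf (f : 'I_B.+1 -> R) : Prop :=
  (forall i, 0 <= f i) /\ \sum_(i < B.+1) f i = 1.

(* T_t(f) for t = k/B : sum of f_i over i >= B t = k *)
Definition tailT (k : nat) (f : 'I_B.+1 -> R) : R :=
  \sum_(i < B.+1 | (k <= i)%N) f i.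

Definition expE (f : 'I_B.+1 -> R) : R :=
  \sum_(i < B.+1 | (1 <= i)%N) (i%:R / B%:R) * f i.

Definition iM (f : 'I_B.+1 -> R) : nat := (\max_(i < B.+1 | (0 < f i)%R) (i : nat))%N.

Definition unimodal (f : 'I_B.+1 -> R) : Prop :=
  exists m : nat, (m <= B)%N /\
    (forall i : nat, (i < m)%N -> fat f i <= fat f i.+1) /\
    (forall i : nat, (m <= i)%N -> (i < B)%N -> fat f i.+1 <= fat f i).

Definition in_U (f : 'I_B.+1 -> R) : Prop := is_pmf f /\ unimodal f.

Definition in_U_eta (eta : R) (f : 'I_B.+1 -> R) : Prop := in_U f /\ expE f <= eta.

End Defs.

(* Main.v *)
Require Import Defs.
From HB Require Import structures.
From mathcomp Require Import all_boot all_order all_algebra.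
From mathcomp Require Import reals.
From mathcomp Require Import ring lra zify.
From Stdlib Require Import Classical.
Import Order.TTheory GRing.Theory Num.Theory.
Local Open Scope ring_scope.
Set Implicit Arguments. Unset Strict Implicit. Unset Printing Implicit Defensive.

Section Gen.
Variable R : realType.

Lemma lin_ok (a b : R) : 0 <= a -> (a = 0 -> 0 <= b) ->
  exists2 e, 0 < e & forall x, 0 < x -> x <= e -> 0 <= a + x * b.
Proof.
move=> a0 ab. have [b0|b0] := leP 0 b.
  exists 1 => // x x0 _. apply: addr_ge0 => //; apply: mulr_ge0 => //; exact: ltW.
have ap : 0 < a.
  rewrite lt_neqAle a0 andbT; apply/eqP=> h. by have := ab (esym h); rewrite leNgt b0.
have nb : 0 < - b by rewrite oppr_gt0.
exists (a / (- b)); first exact: divr_gt0.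
move=> x x0 xe. rewrite ler_pdivlMr // mulrN in xe. lra.
Qed.

Lemma and_eps (P Q : R -> Prop) :
  (exists2 e, 0 < e & forall x, 0 < x -> x <= e -> P x) ->
  (exists2 e, 0 < e & forall x, 0 < x -> x <= e -> Q x) ->
  exists2 e, 0 < e & forall x, 0 < x -> x <= e -> P x /\ Q x.
Proof.
move=> [e1 e10 H1] [e2 e20 H2]; exists (Num.min e1 e2).
  by rewrite lt_min e10 e20.
move=> x x0; rewrite le_min => /andP[h1 h2]; split; [exact: H1|exact: H2].
Qed.

Lemma fin_eps (P : nat -> R -> Prop) N :
  (forall i, (i < N)%N -> exists2 e, 0 < e & forall x, 0 < x -> x <= e -> P i x) ->
  exists2 e, 0 < e & forall i, (i < N)%N -> forall x, 0 < x -> x <= e -> P i x.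
Proof.
elim: N => [|N IH] H.
  by exists 1 => // i.
have [e1 e10 H1] : exists2 e, 0 < e & forall i, (i < N)%N -> forall x, 0 < x -> x <= e -> P i x.
  apply: IH => i iN; apply: H; lia.
have [e2 e20 H2] := H N (ltnSn N).
exists (Num.min e1 e2); first by rewrite lt_min e10 e20.
move=> i iN x x0; rewrite le_min => /andP[h1 h2].
have [iN'|iN'] := ltnP i N; first exact: H1.
have -> : i = N by lia.
exact: H2.
Qed.

Lemma incr_le (u : nat -> R) m : (forall j, (j < m)%N -> u j <= u j.+1) ->
  forall i, (i <= m)%N -> u i <= u m.
Proof.
elim: m => [|m IH] H i Hi.
  by have -> : i = 0%N by lia.
have [e|ne] := eqVneq i m.+1; first by rewrite e.
apply: le_trans (H m (ltnSn m)). apply: IH; last lia.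
move=> j jm; apply: H; lia.
Qed.

Lemma decr_le (u : nat -> R) m n : (forall j, (m <= j)%N -> (j < n)%N -> u j.+1 <= u j) ->
  forall i, (m <= i)%N -> (i <= n)%N -> u i <= u m.
Proof.
elim: n => [|n IH] H i Hi1 Hi2.
  by have -> : i = m by lia.
have [e|ne] := eqVneq i n.+1.
  rewrite e. have [mn|mn] := leqP m n.
    apply: le_trans (H n mn (ltnSn n)) _. apply: IH => //; move=> j j1 j2; apply: H; lia.
  by have -> : m = n.+1 by lia.
apply: IH => //; [move=> j j1 j2; apply: H; lia | lia].
Qed.

End Gen.

Section Pert.
Variable R : realType.
Variable B : nat.

Definition wit (f : 'I_B.+1 -> R) (m : nat) : Prop :=
  (m <= B)%N /\ (forall i : nat, (i < m)%N -> fat f i <= fat f i.+1) /\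
    (forall i : nat, (m <= i)%N -> (i < B)%N -> fat f i.+1 <= fat f i).

Definition adm (f : 'I_B.+1 -> R) (m : nat) (d : nat -> R) : Prop :=
  (forall i, (i <= B)%N -> fat f i = 0 -> 0 <= d i) /\
  (forall i, (i < m)%N -> fat f i = fat f i.+1 -> d i <= d i.+1) /\
  (forall i, (m <= i)%N -> (i < B)%N -> fat f i.+1 = fat f i -> d i.+1 <= d i).

Definition pert (f : 'I_B.+1 -> R) (d : nat -> R) (x : R) : 'I_B.+1 -> R :=
  fun i => f i + x * d i.

Lemma fat_pert f d x i : (i <= B)%N -> fat (pert f d x) i = fat f i + x * d i.
Proof. by move=> h; rewrite /fat /pert inordK. Qed.

Lemma fatE (f : 'I_B.+1 -> R) (i : 'I_B.+1) : fat f i = f i.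
Proof. by rewrite /fat inord_val. Qed.

Lemma pert_ok f m d : is_pmf f -> wit f m -> adm f m d -> \sum_(i < B.+1) d i = 0 ->
  exists2 e, 0 < e & forall x, 0 < x -> x <= e -> is_pmf (pert f d x) /\ wit (pert f d x) m.
Proof.
move=> [f0 f1] [mB [Hi Hd]] [a0 [ai ad]] sd.
pose P i x := 0 <= fat f i + x * d i /\
   (((i < m)%N -> 0 <= (fat f i.+1 - fat f i) + x * (d i.+1 - d i)) /\
    ((m <= i)%N -> (i < B)%N -> 0 <= (fat f i - fat f i.+1) + x * (d i - d i.+1))).
have [e e0 He] : exists2 e, 0 < e & forall i, (i < B.+1)%N -> forall x, 0 < x -> x <= e -> P i x.
  apply: fin_eps => i iB.
  apply: and_eps; first apply: lin_ok.
  - by have := f0 (inord i); rewrite -/(fat f i).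
  - by move/(a0 _ iB).
  apply: and_eps.
    have [im|im] := ltnP i m; last by exists 1 => // x _ _ /(leq_trans im); rewrite ltnn.
    have [e' e'0 He'] := @lin_ok R (fat f i.+1 - fat f i) (d i.+1 - d i)
      (ltac:(rewrite subr_ge0; exact: Hi)) (ltac:(move/eqP; rewrite subr_eq0 => /eqP h;
         rewrite subr_ge0; apply: ai => //)).
    by exists e' => // x x0 xe _; apply: He'.
  have [im|im] := ltnP i m; first by exists 1 => // x _ _ /(leq_trans im); rewrite ltnn.
  have [iB'|iB'] := ltnP i B; last by exists 1 => // x _ _ _ /(leq_trans iB'); rewrite ltnn.
  have [e' e'0 He'] := @lin_ok R (fat f i - fat f i.+1) (d i - d i.+1)
      (ltac:(rewrite subr_ge0; exact: Hd)) (ltac:(move/eqP; rewrite subr_eq0 => /eqP h;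
         rewrite subr_ge0; apply: ad => //)).
  by exists e' => // x x0 xe _ _; apply: He'.
exists e => // x x0 xe; split; first split.
- move=> i. have [h _] := He i (ltn_ord i) x x0 xe. by rewrite /pert -fatE.
- rewrite /pert big_split /= f1 -mulr_sumr sd mulr0 addr0 //.
split => //; split.
- move=> i im. have [_ [h _]] := He i ltac:(lia) x x0 xe.
  rewrite !fat_pert; try lia. have := h im. lra.
- move=> i im iB. have [_ [_ h]] := He i ltac:(lia) x x0 xe.
  rewrite !fat_pert; try lia. have := h im iB. lra.
Qed.

Lemma tail_pert k f d x : tailT k (pert f d x) =
  tailT k f + x * \sum_(i < B.+1 | (k <= i)%N) d i.
Proof. by rewrite /tailT /pert big_split /= mulr_sumr. Qed.

Lemma exp_pert f d x : expE (pert f d x) =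
  expE f + x * \sum_(i < B.+1 | (1 <= i)%N) (i%:R / B%:R) * d i.
Proof.
rewrite /expE /pert mulr_sumr -big_split /=; apply: eq_bigr => i _.
by rewrite mulrDr mulrCA.
Qed.


Implicit Types f : 'I_B.+1 -> R.

Lemma wit_max f m i : wit f m -> (i <= B)%N -> fat f i <= fat f m.
Proof.
move=> [mB [Hi Hd]] iB. have [im|im] := leqP i m.
  exact: (@incr_le R (fat f)).
apply: (@decr_le R (fat f) m B) => //; lia.
Qed.

Lemma wit_pos f m : is_pmf f -> wit f m -> 0 < fat f m.
Proof.
move=> [f0 f1] w.
have : \sum_(i < B.+1) f i <= \sum_(i < B.+1) fat f m.
  apply: ler_sum => i _; rewrite -fatE; apply: wit_max w _; have := ltn_ord i; lia.
rewrite sumr_const card_ord f1 => h.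
rewrite ltNge; apply/negP => h2; have := mulrn_wle0 B.+1 h2; lra.
Qed.

Lemma run_start f : exists q, (q <= B)%N /\
  (forall i, (q <= i)%N -> (i <= B)%N -> fat f i = fat f B) /\
  ((0 < q)%N -> fat f q.-1 <> fat f q).
Proof.
suff H : forall j, (j <= B)%N -> (forall i, (j <= i)%N -> (i <= B)%N -> fat f i = fat f B) ->
  exists q, (q <= B)%N /\
  (forall i, (q <= i)%N -> (i <= B)%N -> fat f i = fat f B) /\
  ((0 < q)%N -> fat f q.-1 <> fat f q).
  apply: (H B) => // i i1 i2; have -> : i = B by lia. done.
elim => [|j IH] jB Hj.
  by exists 0%N; split => //; split.
have [e|ne] := eqVneq (fat f j) (fat f j.+1).
  apply: IH; first lia.
  move=> i i1 i2; have [ij|ij] := eqVneq i j.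
    by rewrite ij e; apply: Hj.
  apply: Hj => //; lia.
exists j.+1; split => //; split => // _ /=; exact/eqP.
Qed.

Lemma plateau_end f m : wit f m -> exists s, (m <= s)%N /\ wit f s /\
  (s = B \/ fat f s.+1 < fat f s).
Proof.
suff H : forall d m, (B - m <= d)%N -> wit f m -> exists s, (m <= s)%N /\ wit f s /\
  (s = B \/ fat f s.+1 < fat f s) by apply: H.
elim => [|d IH] {}m dm w; have [mB [Hi Hd]] := w.
  exists m; split => //; split => //; left; lia.
have [mB'|mB'] := eqVneq m B.
  by exists m; split => //; split => //; left.
have mlt : (m < B)%N by lia.
have := Hd m (leqnn m) mlt; rewrite le_eqVlt => /orP[/eqP e|lt]; last first.
  by exists m; split => //; split => //; right.
have w' : wit f m.+1.
  split => //; split.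
    move=> i im; have [ie|ie] := eqVneq i m; first by rewrite ie e.
    apply: Hi; lia.
  move=> i i1 i2; apply: Hd => //; lia.
have [s [s1 [s2 s3]]] := IH m.+1 ltac:(lia) w'.
exists s; split => //; lia.
Qed.

Lemma wit_down f s : wit f s -> (0 < s)%N -> fat f s.-1 = fat f s -> wit f s.-1.
Proof.
move=> [sB [Hi Hd]] s0 e; split; first lia; split.
  move=> i ii; apply: Hi; lia.
move=> i i1 i2; have [ie|ie] := eqVneq i s.-1.
  by rewrite ie prednK // e.
apply: Hd => //; lia.
Qed.

Lemma iM_ub f i : (i <= B)%N -> 0 < fat f i -> (i <= iM f)%N.
Proof.
move=> iB h. have := @leq_bigmax_cond _ (fun j : 'I_B.+1 => 0 < f j) (fun j => nat_of_ord j)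
  (inord i) h. by rewrite inordK.
Qed.

Lemma iM_le f : (iM f <= B)%N.
Proof. apply/bigmax_leqP => i _; rewrite -ltnS; exact: ltn_ord. Qed.

Lemma iM_pos f i : (i <= B)%N -> 0 < fat f i -> 0 < fat f (iM f).
Proof.
move=> iB h. rewrite /iM.
have -> : (\max_(j < B.+1 | (0 < f j)%R) (j : nat))%N =
  (\max_(j in (fun j : 'I_B.+1 => (0 < f j)%R)) (j : nat))%N by apply: eq_bigl.
have [j Pj ->] := @eq_bigmax_cond _ (fun j : 'I_B.+1 => 0 < f j) (fun j => nat_of_ord j)
  (ltac:(apply/card_gt0P; exists (inord i); done)).
by rewrite fatE.
Qed.

Lemma iM_zero f i : is_pmf f -> (i <= B)%N -> (iM f < i)%N -> fat f i = 0.
Proof.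
move=> [f0 _] iB lt. have := f0 (inord i); rewrite -/(fat f i) le_eqVlt => /orP[/eqP <-//|h].
have := iM_ub iB h; lia.
Qed.

Definition delta (a i : nat) : R := if i == a then 1 else 0.
Definition dd (a b i : nat) : R := delta a i - delta b i.

Lemma sum_delta (P : pred nat) (F : nat -> R) a : (a <= B)%N ->
  \sum_(i < B.+1 | P i) F i * delta a i = if P a then F a else 0.
Proof.
move=> aB. rewrite big_mkcond (bigD1 (@inord B a)) //= inordK // big1 ?addr0.
  by rewrite /delta eqxx mulr1; case: (P a).
move=> i ne; rewrite /delta; case: eqP => h; last by rewrite mulr0; case: (P i).
by case/eqP: ne; apply: val_inj; rewrite /= inordK.
Qed.

Lemma sum_delta1 (P : pred nat) a : (a <= B)%N ->
  \sum_(i < B.+1 | P i) delta a i = if P a then 1 else 0.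
Proof.
move=> aB; rewrite -(sum_delta P (fun _ => 1) aB); apply: eq_bigr => i _; by rewrite mul1r.
Qed.

Lemma delta_ge0 a i : 0 <= delta a i.
Proof. by rewrite /delta; case: eqP. Qed.

Lemma delta_ne a i : i <> a -> delta a i = 0.
Proof. by rewrite /delta; case: eqP. Qed.

Lemma adm_dd f w a b : (a < b)%N -> (b <= B)%N -> 0 < fat f b ->
  ((a < w)%N -> fat f a <> fat f a.+1) ->
  ((b.-1 < w)%N -> fat f b.-1 <> fat f b) ->
  ((0 < a)%N -> (w <= a.-1)%N -> fat f a <> fat f a.-1) ->
  ((w <= b)%N -> (b < B)%N -> fat f b.+1 <> fat f b) ->
  adm f w (dd a b).
Proof.
move=> ab bB fb h1 h2 h3 h4; split; [|split].
- move=> i iB fi; rewrite /dd (delta_ne (a := b)); first by rewrite subr0 delta_ge0.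
  by move=> e; move: fb; rewrite -e fi ltxx.
- move=> i iw e; rewrite /dd.
  have [ia|ia] := eqVneq i a.
    by case: (h1 ltac:(lia)); rewrite -ia.
  have [ib|ib] := eqVneq i.+1 b.
    case: (h2 ltac:(lia)); by rewrite -ib /= e.
  rewrite (delta_ne (a := a) (i := i)); last exact/eqP.
  rewrite (delta_ne (a := b) (i := i.+1)); last exact/eqP.
  have := delta_ge0 a i.+1; have := delta_ge0 b i; lra.
- move=> i i1 i2 e; rewrite /dd.
  have [ia|ia] := eqVneq i.+1 a.
    case: (h3 ltac:(lia) ltac:(lia)); by rewrite -ia /= e.
  have [ib|ib] := eqVneq i b.
    by case: (h4 ltac:(lia) ltac:(lia)); rewrite -ib.
  rewrite (delta_ne (a := a) (i := i.+1)); last exact/eqP.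
  rewrite (delta_ne (a := b) (i := i)); last exact/eqP.
  have := delta_ge0 a i; have := delta_ge0 b i.+1; lra.
Qed.

Lemma sum_dd (P : pred nat) (F : nat -> R) a b : (a <= B)%N -> (b <= B)%N ->
  \sum_(i < B.+1 | P i) F i * dd a b i =
  (if P a then F a else 0) - (if P b then F b else 0).
Proof.
move=> aB bB; rewrite -(sum_delta P F aB) -(sum_delta P F bB) -sumrB.
by apply: eq_bigr => i _; rewrite /dd mulrBr.
Qed.


Variable k : nat.
Variable eta : R.
Hypothesis B1 : (1 <= B)%N.
Hypothesis k1 : (1 <= k)%N.
Hypothesis kB : (k <= B)%N.
Hypothesis etak : eta < k%:R / B%:R.

Definition opt (f : 'I_B.+1 -> R) := in_U_eta eta f /\ (forall g : 'I_B.+1 -> R, in_U_eta eta g -> tailT k g <= tailT k f).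

Definition dT (d : nat -> R) := \sum_(i < B.+1 | (k <= i)%N) d i.
Definition dE (d : nat -> R) := \sum_(i < B.+1 | (1 <= i)%N) (i%:R / B%:R) * d i.

Lemma C1 f m d : opt f -> wit f m -> adm f m d -> \sum_(i < B.+1) d i = 0 ->
  0 < dT d -> (dE d <= 0 \/ expE f < eta) -> False.
Proof.
move=> [[[pf uf] ef] mx] w ad sd dt0 hyp.
have [e e0 He] := pert_ok pf w ad sd.
have [e' e'0 He'] : exists2 e, 0 < e & forall x, 0 < x -> x <= e -> expE f + x * dE d <= eta.
  case: hyp => [dle|lt].
    exists 1 => // x x0 _. have : x * dE d <= 0 by rewrite pmulr_rle0. lra.
  have [e' e'0 He'] := @lin_ok R (eta - expE f) (- dE d) (ltac:(lra)) (ltac:(lra)).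
  exists e' => // x x0 xe; have := He' x x0 xe; rewrite mulrN; lra.
pose x := Num.min e e'.
have x0 : 0 < x by rewrite lt_min e0 e'0.
have xe : x <= e by rewrite ge_min lexx.
have xe' : x <= e' by rewrite ge_min lexx orbT.
have [pg wg] := He x x0 xe.
have hg : in_U_eta eta (pert f d x).
  split; first by split => //; exists m.
  rewrite exp_pert; exact: He'.
have := mx _ hg; rewrite tail_pert -/(dT d).
have : 0 < x * dT d by apply: mulr_gt0.
lra.
Qed.

Lemma expE_tail f : is_pmf f -> k%:R / B%:R * tailT k f <= expE f.
Proof.
move=> [f0 _].
rewrite /tailT mulr_sumr.
apply: (@le_trans _ _ (\sum_(i < B.+1 | (k <= i)%N) (i%:R / B%:R) * f i)).
  apply: ler_sum => i ki; apply: ler_wpM2r => //; apply: ler_wpM2r; first by rewrite invr_ge0.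
  by rewrite ler_nat.
rewrite /expE big_mkcond [X in _ <= X]big_mkcond /=.
apply: ler_sum => i _.
case: ifP => ki; first by rewrite ifT //; lia.
case: ifP => // _; apply: mulr_ge0 => //; apply: mulr_ge0 => //; by rewrite invr_ge0.
Qed.

Lemma kB0 : 0 < k%:R / B%:R :> R.
Proof. by apply: divr_gt0; rewrite ltr0n; [exact: k1 | exact: B1]. Qed.

Lemma tail_lt1 f : in_U_eta eta f -> tailT k f < 1.
Proof.
move=> [[pf _] ef]. have := expE_tail pf.
have := kB0 => h0 h.
have := etak => hk.
have : k%:R / B%:R * tailT k f < k%:R / B%:R * 1 by rewrite mulr1; lra.
by rewrite ltr_pM2l.
Qed.

Lemma sum_fat f : is_pmf f -> \sum_(i < B.+1) fat f i = 1.
Proof. by move=> [_ f1]; rewrite -f1; apply: eq_bigr => i _; rewrite fatE. Qed.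

Lemma part_i f : opt f -> expE f = eta.
Proof.
move=> o. have [[[pf [w0 uw0]] ef] mx] := o.
apply/eqP; rewrite eq_le ef /= leNgt; apply/negP => lt.
have T1 := tail_lt1 o.1.
case: (classic (exists m, wit f m /\ (k <= m)%N)) => [[m [w km]]|nI].
  pose d i := delta m i - fat f i.
  apply: (C1 (d := d) o w).
  - split; [|split].
    + by move=> i _ e; rewrite /d e subr0 delta_ge0.
    + move=> i im e; rewrite /d e (delta_ne (a := m) (i := i)); last lia.
      have := delta_ge0 m i.+1. lra.
    + move=> i i1 i2 e; rewrite /d e delta_ne; last lia. have := delta_ge0 m i. lra.
  - by rewrite /d sumrB sum_fat // (sum_delta1 xpredT) //; [rewrite subrr | case: w].
  - rewrite /dT /d sumrB (sum_delta1 (fun i => k <= i)%N); last by case: w.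
    rewrite ifT //. have -> : \sum_(i < B.+1 | (k <= i)%N) fat f i = tailT k f.
      by apply: eq_bigr => i _; rewrite fatE.
    lra.
  - by right.
have w0w : wit f w0 by [].
have w0k : (w0 < k)%N by rewrite ltnNge; apply/negP => h; apply: nI; exists w0.
have [q [qB [Hq Hq0]]] := run_start f.
have wq : (w0 < q)%N.
  rewrite ltnNge; apply/negP => qw; apply: nI; exists B; split => //; split => //; split.
    move=> i iB. have [iw|iw] := ltnP i w0; first by case: w0w => _ [H _]; apply: H.
    rewrite (Hq i) ?(Hq i.+1) //; lia.
  by move=> i i1 i2; lia.
pose h i : R := if (q <= i)%N then 1 else 0.
pose S := \sum_(i < B.+1) h i.
pose d i := h i - S * fat f i.
have hge0 i : 0 <= h i by rewrite /h; case: ifP.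
have ad : adm f w0 d.
  split; [|split].
  - by move=> i _ e; rewrite /d e mulr0 subr0.
  - move=> i iw e; rewrite /d e. suff : h i <= h i.+1 by lra.
    rewrite /h; case: ifP => qi; first by rewrite ifT //; lia. by case: ifP.
  - move=> i i1 i2 e; rewrite /d e. suff : h i.+1 <= h i by lra.
    rewrite /h; case: (ltnP i.+1 q) => qi; first by rewrite ifF //; lia.
    case: (leqP q i) => qi'; first by rewrite lexx.
    have qe : q = i.+1 by lia.
    by case: (Hq0 ltac:(lia)); rewrite qe /= e.
have sd : \sum_(i < B.+1) d i = 0.
  by rewrite /d sumrB -mulr_sumr sum_fat // mulr1 subrr.
have hB : h B = 1 by rewrite /h ifT.
have S1 : 1 <= S.
  rewrite /S (bigD1 (@ord_max B)) //= hB lerDl. by apply: sumr_ge0 => i _.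
apply: (C1 (d := d) o w0w ad sd _ (or_intror lt)).
rewrite /dT /d sumrB -mulr_sumr.
have -> : \sum_(i < B.+1 | (k <= i)%N) fat f i = tailT k f.
  by apply: eq_bigr => i _; rewrite fatE.
have [qk|qk] := leqP k q.
  have -> : \sum_(i < B.+1 | (k <= i)%N) h i = S.
    rewrite /S [RHS](bigID (fun i : 'I_B.+1 => (k <= i)%N)) /= [X in _ = _ + X]big1 ?addr0 //.
    move=> i ki; rewrite /h ifF //; lia.
  have : 0 < S * (1 - tailT k f) by apply: mulr_gt0; lra.
  lra.
pose c := fat f B.
pose N := \sum_(i < B.+1 | (k <= i)%N) h i.
have TN : tailT k f = c * N.
  rewrite /N mulr_sumr; apply: eq_bigr => i ki.
  rewrite /h ifT; last lia. rewrite mulr1 -fatE Hq //; [lia | have := ltn_ord i; lia].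
have N1 : 1 <= N.
  rewrite /N (bigD1 (@ord_max B)) //= hB lerDl. by apply: sumr_ge0 => i _.
have Sc : S * c < 1.
  have fw := wit_pos pf w0w.
  rewrite -(sum_fat pf) /S mulr_suml.
  rewrite [X in _ < X](bigD1 (@inord B w0)) //= [X in X < _](bigD1 (@inord B w0)) //=.
  have -> : h (@inord B w0) = 0 by rewrite /h inordK ?ifF //; lia.
  rewrite mul0r add0r.
  have fw' : 0 < fat f (@inord B w0) by rewrite fatE; exact: fw.
  have : \sum_(i < B.+1 | i != inord w0) h i * c <= \sum_(i < B.+1 | i != inord w0) fat f i.
    apply: ler_sum => i _; rewrite /h; case: ifP => qi.
      by rewrite mul1r /c -(Hq i) //; have := ltn_ord i; lia.
    rewrite mul0r fatE; by case: pf.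
  lra.
rewrite TN -/N.
have -> : N - S * (c * N) = N * (1 - S * c) by ring.
apply: mulr_gt0; lra.
Qed.

Lemma C2 f m d : opt f -> wit f m -> adm f m d -> \sum_(i < B.+1) d i = 0 ->
  0 <= dT d -> dE d < 0 -> False.
Proof.
move=> o w ad sd dt de.
have [[[pf uf] ef] mx] := o.
have [e e0 He] := pert_ok pf w ad sd.
have [pg wg] := He e e0 (lexx e).
have ex := part_i o.
have eg : expE (pert f d e) < eta.
  rewrite exp_pert -/(dE d) ex. have : e * dE d < 0 by rewrite pmulr_rlt0. lra.
have og : opt (pert f d e).
  split; first by split; [split => //; exists m | exact: ltW].
  move=> g hg. rewrite tail_pert -/(dT d). have := mx g hg.
  have : 0 <= e * dT d by apply: mulr_ge0 => //; exact: ltW.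
  lra.
have := part_i og. lra.
Qed.

Lemma fat_ge0 f i : is_pmf f -> 0 <= fat f i.
Proof. by move=> [f0 _]; exact: f0. Qed.

Lemma C2dd f w a b : opt f -> wit f w -> (a < b)%N -> (b <= B)%N -> 0 < fat f b ->
  ((a < w)%N -> fat f a <> fat f a.+1) ->
  ((b.-1 < w)%N -> fat f b.-1 <> fat f b) ->
  ((0 < a)%N -> (w <= a.-1)%N -> fat f a <> fat f a.-1) ->
  ((w <= b)%N -> (b < B)%N -> fat f b.+1 <> fat f b) ->
  ((k <= b)%N -> (k <= a)%N) -> False.
Proof.
move=> o hw ab bB fb h1 h2 h3 h4 h5.
have aB : (a <= B)%N by lia.
apply: (C2 o hw (adm_dd ab bB fb h1 h2 h3 h4)).
- by rewrite /dd sumrB !(sum_delta1 xpredT) // subrr.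
- rewrite /dT /dd sumrB !(sum_delta1 (fun i => k <= i)%N) //.
  case: ifP => ka; case: ifP => kb; rewrite ?subrr ?subr0 ?sub0r //; try lra.
  by have := h5 kb; rewrite ka.
- rewrite /dE (sum_dd (fun i => 1 <= i)%N (fun i : nat => i%:R / B%:R)) //.
  have Bp : 0 < (B%:R : R)^-1 by rewrite invr_gt0 ltr0n; exact: B1.
  have hb : a%:R / B%:R < b%:R / B%:R :> R by rewrite ltr_pM2r // ltr_nat.
  have ha : 0 <= a%:R / B%:R :> R by apply: mulr_ge0 => //; exact: ltW.
  rewrite (ifT (b := (1 <= b)%N)); last lia.
  case: ifP => _; lra.
Qed.

Lemma const_run (u : nat -> R) s N : (forall j, (s <= j)%N -> (j.+1 <= N)%N -> u j.+1 = u j) ->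
  forall i, (s <= i)%N -> (i <= N)%N -> u i = u s.
Proof.
move=> H; elim => [|i IH] i1 i2.
  by have -> : s = 0%N by lia.
have [e|ne] := eqVneq i.+1 s; first by rewrite e.
rewrite H; [apply: IH|..]; lia.
Qed.

Lemma caseI1 f m : opt f -> wit f m -> (k <= m)%N -> iM f = m.
Proof.
move=> o w km. have pf := o.1.1.1. have fm := wit_pos pf w. have mB := w.1.
have mn := iM_ub mB fm. have nB := iM_le f. have fn := iM_pos mB fm.
apply/eqP; rewrite eqn_leq mn andbT leqNgt; apply/negP => lt.
apply: (C2dd o w lt nB fn).
- by rewrite ltnn.
- move=> h; lia.
- move=> h1 h2; lia.
- move=> _ hB. rewrite (@iM_zero f (iM f).+1 pf hB (ltnSn _)) => e.
  by move: fn; rewrite -e ltxx.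
- by move=> _.
Qed.

Lemma caseI f m : opt f -> wit f m -> (k <= m)%N ->
  iM f = k /\ (forall i, (i <= (iM f).-1)%N -> fat f i = fat f 0) /\
  fat f (iM f).-1 <= fat f (iM f).
Proof.
move=> o w km. have pf := o.1.1.1.
have e := caseI1 o w km.
have [mB [Hi Hd]] := w.
have fm := wit_pos pf w.
have k1' := k1.
have mk : m = k.
  apply/eqP; rewrite eqn_leq km andbT leqNgt; apply/negP => lt.
  have := Hi m.-1 ltac:(lia); rewrite prednK; last lia.
  rewrite le_eqVlt => /orP[/eqP eq|lt'].
    have w' := wit_down w (ltac:(lia)) eq. have := caseI1 o w' ltac:(lia). lia.
  apply: (C2dd (a := m.-1) (b := m) o w) => //; try lia.
  - move=> _; rewrite prednK; last lia. by move=> h; move: lt'; rewrite h ltxx.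
  - by move=> _ h; move: lt'; rewrite h ltxx.
  - move=> _ hB. have z : (iM f < m.+1)%N by lia.
    rewrite (@iM_zero f m.+1 pf hB z) => h. by move: fm; rewrite -h ltxx.
have e2 : iM f = k by rewrite e mk.
clear e; subst m; rewrite e2; split => //; split.
  have step : forall j, (0 <= j)%N -> (j.+1 <= k.-1)%N -> fat f j.+1 = fat f j.
    move=> j _ jk. have := Hi j ltac:(lia); rewrite le_eqVlt => /orP[/eqP eq|lt] //.
    exfalso; apply: (C2dd (a := j) (b := j.+1) o w) => //; try lia.
    - by have := fat_ge0 j pf; lra.
    - by move=> _ h; move: lt; rewrite h ltxx.
    - by move=> _ h; move: lt; rewrite /= h ltxx.
  move=> i ik; exact: (const_run step).
have := Hi k.-1 ltac:(lia); by rewrite prednK.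
Qed.

Lemma caseII f : opt f -> (forall m, wit f m -> (m < k)%N) ->
  fat f 0 > fat f 1 /\
  (forall i, (1 <= i)%N -> (i <= (iM f).-1)%N -> fat f i = fat f 1) /\
  fat f (iM f).-1 >= fat f (iM f).
Proof.
move=> o nI. have pf := o.1.1.1.
have [w0 ww] := o.1.1.2.
have [s [ws1 [ws ws2]]] := plateau_end ww.
have sk := nI s ws.
have kB' := kB.
have ds : fat f s.+1 < fat f s by case: ws2 => // e; lia.
have fs := wit_pos pf ws.
have s0 : s = 0%N.
  apply/eqP; rewrite eqn0Ngt; apply/negP => sp.
  have := ws.2.1 s.-1 ltac:(lia); rewrite prednK // le_eqVlt => /orP[/eqP eq|lt].
    have ws' := wit_down ws sp eq.
    apply: (C2dd (a := s.-1) (b := s) o ws') => //; try lia.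
    by move=> _ _ h; move: ds; rewrite h ltxx.
  apply: (C2dd (a := s.-1) (b := s) o ws) => //; try lia.
  - move=> _; rewrite prednK //. by move=> h; move: lt; rewrite h ltxx.
  - by move=> _ h; move: lt; rewrite h ltxx.
  - by move=> _ _ h; move: ds; rewrite h ltxx.
subst s.
have f0p : 0 < fat f (iM f) by apply: (@iM_pos f 0%N).
have nB := iM_le f.
split => //; split.
  have step : forall j, (1 <= j)%N -> (j.+1 <= (iM f).-1)%N -> fat f j.+1 = fat f j.
    move=> j j1 jn. have := ws.2.2 j ltac:(lia) ltac:(lia).
    rewrite le_eqVlt => /orP[/eqP eq|lt] //.
    exfalso. have [jk|jk] := ltnP j k.
      apply: (C2dd (a := 0%N) (b := j) o ws) => //; try lia.
      - by have := fat_ge0 j.+1 pf; lra.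
      - by move=> _ _ h; move: lt; rewrite h ltxx.
    apply: (C2dd (a := j.+1) (b := iM f) o ws) => //; try lia.
    - by move=> _ _ h; move: lt; rewrite /= h ltxx.
    - move=> _ hB. rewrite (@iM_zero f (iM f).+1 pf hB (ltnSn _)) => e.
      by move: f0p; rewrite -e ltxx.
  move=> i i1 i2; exact: (const_run step).
have [n0|n0] := eqVneq (iM f) 0%N; first by rewrite n0.
have := ws.2.2 (iM f).-1 ltac:(lia) ltac:(lia). by rewrite prednK // lt0n.
Qed.

Lemma main_sec f : opt f -> expE f = eta /\
  ( ( fat f 0 > fat f 1 /\
      (forall i : nat, (1 <= i)%N -> (i <= (iM f).-1)%N -> fat f i = fat f 1) /\
      fat f (iM f).-1 >= fat f (iM f) )
  \/
    ( iM f = k /\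
      (forall i : nat, (i <= (iM f).-1)%N -> fat f i = fat f 0) /\
      fat f (iM f).-1 <= fat f (iM f) ) ).
Proof.
move=> o. have _ := B1. have _ := k1. have _ := kB. have _ := etak.
split; first exact: part_i o.
case: (classic (exists m, wit f m /\ (k <= m)%N)) => [[m [w km]]|nI].
  right; exact: caseI o w km.
left; apply: caseII o _ => m w; rewrite ltnNge; apply/negP => km; apply: nI; by exists m.
Qed.

End Pert.

Theorem proposition4 (R : realType) (B k : nat) (eta : R) (fs : 'I_B.+1 -> R) :
  (1 <= B)%N -> (k <= B)%N ->
  0 < eta -> eta < k%:R / B%:R ->
  in_U_eta eta fs ->
  (forall g : 'I_B.+1 -> R, in_U_eta eta g -> tailT k g <= tailT k fs) ->
  expE fs = eta /\
  ( ( fat fs 0 > fat fs 1 /\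
      (forall i : nat, (1 <= i)%N -> (i <= (iM fs).-1)%N -> fat fs i = fat fs 1) /\
      fat fs (iM fs).-1 >= fat fs (iM fs) )
  \/
    ( iM fs = k /\
      (forall i : nat, (i <= (iM fs).-1)%N -> fat fs i = fat fs 0) /\
      fat fs (iM fs).-1 <= fat fs (iM fs) ) ).
Proof.
move=> B1 kB eta0 etak hU hmax.
have k1 : (1 <= k)%N.
  rewrite lt0n; apply/negP => /eqP k0; move: etak; rewrite k0 mul0r => h. lra.
exact: (@main_sec R B k eta B1 k1 kB etak fs (conj hU hmax)).
Qed.
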